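(* Let $G$ be a graph on $n$ vertices with at least two vertex-disjoint edges. Then $\Gamma(G)+1 \le d_0(G) \le \min\{n-1, \Gamma(G)+\gamma(G)\}$.
   Context: All graphs are finite and simple. A set $S \subseteq V(G)$ is a dominating set of $G$ if every vertex of $V(G)\setminus S$ is adjacent to a vertex of $S$; it is a minimal dominating set if no proper subset of it is a dominating set. $\gamma(G)$ is the minimum cardinality of a dominating set of $G$, and $\Gamma(G)$ is the maximum cardinality of a minimal dominating set of $G$. For an integer $k \ge \gamma(G)$, the $k$-dominating graph $D_k(G)$ is the graph whose vertices are the dominating sets of $G$ of cardinality at most $k$, with two such sets $A,B$ adjacent if and only if their symmetric difference $(A\setminus B)\cup(B\setminus A)$ consists of exactly one vertex of $G$. $d_0(G)$ denotes the smallest integer $d \ge \gamma(G)$ such that $D_k(G)$ is connected for every integer $k \ge d$. *)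

(* Defs.v *)
(* A simple graph is a symmetric irreflexive relation e on a finType T. *)
From mathcomp Require Import all_boot.
Set Implicit Arguments. Unset Strict Implicit. Unset Printing Implicit Defensive.

Section Dom.
Variables (T : finType) (e : rel T).

Definition dominating (S : {set T}) : bool :=
  [forall v, (v \notin S) ==> [exists u in S, e u v]].

Definition minimal_dominating (S : {set T}) : bool :=
  dominating S && [forall B : {set T}, (B \proper S) ==> ~~ dominating B].

(* gamma(G): minimum cardinality of a dominating set (V(G) itself dominates) *)
Definition gamma_dom : nat :=
  \big[minn/#|T|]_(S : {set T} | dominating S) #|S|.

Definition Gamma_dom : nat :=
  \max_(S : {set T} | minimal_dominating S) #|S|.

Definition symdiff (A B : {set T}) : {set T} := (A :\: B) :|: (B :\: A).

Definition Dk_vertex (k : nat) (A : {set T}) : bool :=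
  dominating A && (#|A| <= k).

Definition Dk_edge (k : nat) : rel {set T} :=
  fun A B => [&& Dk_vertex k A, Dk_vertex k B & #|symdiff A B| == 1].

Definition Dk_connected (k : nat) : Prop :=
  forall A B : {set T}, Dk_vertex k A -> Dk_vertex k B -> connect (Dk_edge k) A B.

Definition d0_prop (d : nat) : Prop :=
  gamma_dom <= d /\ (forall k, d <= k -> Dk_connected k).

Definition is_d0 (d : nat) : Prop :=
  d0_prop d /\ (forall d', d0_prop d' -> d <= d').

End Dom.

(* Main.v *)
Require Import Defs.
From mathcomp Require Import all_boot.
From Stdlib Require Import Classical.
Set Implicit Arguments. Unset Strict Implicit. Unset Printing Implicit Defensive.

Lemma dom_sub (T : finType) (e : rel T) (C A : {set T}) :
  C \subset A -> dominating e C -> dominating e A.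
Proof.
move=> sCA /forallP dC; apply/forallP => v; apply/implyP => vA.
have vC : v \notin C by apply/negP => /(subsetP sCA); rewrite (negbTE vA).
have /existsP [u /andP [uC euv]] := implyP (dC v) vC.
by apply/existsP; exists u; rewrite (subsetP sCA u uC) euv.
Qed.

Lemma symdiffC (T : finType) (A B : {set T}) : symdiff A B = symdiff B A.
Proof. by rewrite /symdiff setUC. Qed.

Lemma Dk_edge_sym (T : finType) (e : rel T) k : symmetric (Dk_edge e k).
Proof. by move=> A B; rewrite /Dk_edge symdiffC andbCA. Qed.

Lemma conn_down (T : finType) (e : rel T) k (C A : {set T}) :
  C \subset A -> dominating e C -> #|A| <= k -> connect (Dk_edge e k) A C.
Proof.
move=> sCA dC.
move: {2}#|A :\: C| (leqnn #|A :\: C|) => n; elim: n A sCA => [|n IH] A sCA.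
  rewrite leqn0 cards_eq0 setD_eq0 => sAC kA.
  by rewrite (eqP (_ : A == C)) // eqEsubset sAC sCA.
move=> hn kA.
case: (boolP (A \subset C)) => [sAC|].
  by rewrite (eqP (_ : A == C)) // eqEsubset sAC sCA.
case/subsetPn => x xA xC.
have sCA' : C \subset A :\ x.
  apply/subsetP => y yC; rewrite !inE (subsetP sCA y yC) andbT.
  by apply/eqP => yx; rewrite -yx yC in xC.
have cA : #|A| = #|A :\ x|.+1 by rewrite (cardsD1 x A) xA.
apply: connect_trans (IH _ sCA' _ _).
- apply: connect1; rewrite /Dk_edge /Dk_vertex.
  rewrite (dom_sub sCA dC) (dom_sub sCA' dC) kA /=.
  rewrite (leq_trans _ kA) ?cA ?leqnSn //=.
  apply/cards1P; exists x; apply/setP => y; rewrite /symdiff !inE.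
  by case: (y =P x) => [->|_]; rewrite ?eqxx ?xA //=; case: (y \in A).
- have -> : (A :\ x) :\: C = (A :\: C) :\ x by apply/setP=> y; rewrite !inE andbCA.
  have : #|A :\: C| = #|(A :\: C) :\ x|.+1 by rewrite (cardsD1 x (A :\: C)) !inE xA xC.
  by move=> h; move: hn; rewrite h.
- by rewrite (leq_trans _ kA) // cA.
Qed.

Lemma conn_sym (T : finType) (e : rel T) k A B :
  connect (Dk_edge e k) A B -> connect (Dk_edge e k) B A.
Proof. by rewrite (sym_connect_sym (@Dk_edge_sym T e k)). Qed.

Lemma conn_floor (T : finType) (e : rel T) k (C A B : {set T}) :
  C \subset A -> C \subset B -> dominating e C -> #|A| <= k -> #|B| <= k ->
  connect (Dk_edge e k) A B.
Proof.
move=> sA sB dC kA kB; apply: connect_trans (conn_down sA dC kA) _.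
exact: conn_sym (conn_down sB dC kB).
Qed.

Lemma conn_roof (T : finType) (e : rel T) k (U A B : {set T}) :
  A \subset U -> B \subset U -> dominating e A -> dominating e B -> #|U| <= k ->
  connect (Dk_edge e k) A B.
Proof.
move=> sA sB dA dB kU; apply: connect_trans (conn_sym (conn_down sA dA kU)) _.
exact: conn_down sB dB kU.
Qed.

Lemma exists_minimal (T : finType) (e : rel T) (A : {set T}) :
  dominating e A -> exists2 M : {set T}, M \subset A & minimal_dominating e M.
Proof.
move: {2}#|A| (leqnn #|A|) => n; elim: n A => [|n IH] A hn dA.
  exists A => //; rewrite /minimal_dominating dA /=; apply/forallP => B.
  by apply/implyP => /proper_card; rewrite ltnNge (leq_trans hn) ?leq0n.
case: (boolP (minimal_dominating e A)) => [mA|]; first by exists A.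
rewrite /minimal_dominating dA /= negb_forall => /existsP [B].
rewrite negb_imply negbK => /andP [pBA dB].
have [M sMB mM] := IH B (leq_trans (proper_card pBA) hn) dB.
exists M => //; exact: subset_trans sMB (proper_sub pBA).
Qed.

Lemma dom_setT (T : finType) (e : rel T) : dominating e [set: T].
Proof. by apply/forallP => v; rewrite inE. Qed.

Lemma gamma_le (T : finType) (e : rel T) (S : {set T}) :
  dominating e S -> gamma_dom e <= #|S|.
Proof.
move=> dS; rewrite /gamma_dom.
have : S \in index_enum {set T} by rewrite mem_index_enum.
elim: (index_enum _) => // x r IH; rewrite inE big_cons => /orP [/eqP <-|/IH h].
  by rewrite dS geq_minl.
by case: ifP => _ //; rewrite geq_min h orbT.
Qed.

Lemma gamma_att (T : finType) (e : rel T) :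
  exists2 D : {set T}, dominating e D & #|D| = gamma_dom e.
Proof.
rewrite /gamma_dom; apply: (big_ind (fun x => exists2 D : {set T}, dominating e D & #|D| = x)).
- by exists [set: T]; rewrite ?cardsT ?dom_setT.
- move=> x y [D1 d1 <-] [D2 d2 <-]; rewrite /minn; case: ifP => _.
    by exists D1. by exists D2.
- by move=> S dS; exists S.
Qed.

Lemma Gamma_ge (T : finType) (e : rel T) (S : {set T}) :
  minimal_dominating e S -> #|S| <= Gamma_dom e.
Proof. by move=> mS; rewrite /Gamma_dom; apply: leq_bigmax_cond. Qed.

Lemma Gamma_att (T : finType) (e : rel T) :
  exists2 S : {set T}, minimal_dominating e S & #|S| = Gamma_dom e.
Proof.
have [M _ mM] := exists_minimal (dom_setT e).
have : (Gamma_dom e == 0) \/ exists2 S : {set T}, minimal_dominating e S & #|S| = Gamma_dom e.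
  rewrite /Gamma_dom.
  apply: (big_ind (fun x => (x == 0) \/ exists2 S : {set T}, minimal_dominating e S & #|S| = x)).
  - by left.
  - move=> x y hx hy; rewrite /maxn; case: ifP => _; [exact: hy | exact: hx].
  - by move=> S mS; right; exists S.
case=> [/eqP G0|//]; exists M => //.
by apply/eqP; rewrite G0 -leqn0 -G0 Gamma_ge.
Qed.

Lemma min_dom (T : finType) (e : rel T) S : minimal_dominating e S -> dominating e S.
Proof. by case/andP. Qed.

Lemma no_step (T : finType) (e : rel T) k (S S' : {set T}) :
  minimal_dominating e S -> k <= #|S| -> ~~ Dk_edge e k S S'.
Proof.
move=> mS kS; apply/negP; rewrite /Dk_edge /Dk_vertex.
case/and3P => _ /andP [dS' kS'] /cards1P [y hy].
have mem z : z \in symdiff S S' -> z = y by rewrite hy inE => /eqP.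
case: (boolP (S' \subset S)) => [sub|].
  have pr : S' \proper S.
    rewrite properEneq sub andbT; apply/eqP => eqS.
    by have := set11 y; rewrite -hy eqS /symdiff setDv setU0 inE.
  by case/andP: mS => _ /forallP /(_ S'); rewrite pr dS'.
case/subsetPn => z zS' zS.
have zy : z = y by apply: mem; rewrite /symdiff !inE zS' zS.
have sub : S \subset S'.
  apply/subsetP => w wS; apply/negPn/negP => wS'.
  have : w = y by apply: mem; rewrite /symdiff !inE wS wS'.
  by move=> wy; move: wS; rewrite wy -zy (negbTE zS).
have pr : S \proper S' by rewrite properE sub; apply/subsetPn; exists z.
by have := leq_trans (proper_card pr) kS'; rewrite ltnNge kS.
Qed.

Lemma other_min (T : finType) (e : rel T) (e_sym : symmetric e) (e_irr : irreflexive e)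
  a b (eab : e a b) (S : {set T}) :
  minimal_dominating e S -> exists2 M, minimal_dominating e M & M != S.
Proof.
move=> mS; have dS := min_dom mS.
pose I := [set v | [forall u, ~~ e v u]].
pose X := ~: S :|: I.
have dX : dominating e X.
  apply/forallP => v; apply/implyP; rewrite !inE negb_or negbK negb_forall.
  case/andP => vS /existsP [u]; rewrite negbK => evu.
  case/andP: mS => _ /forallP /(_ (S :\ v)).
  rewrite properD1 // /= /dominating negb_forall => /existsP [w].
  rewrite negb_imply => /andP [wSv] /existsPn hw.
  case: (w =P v) => [wv|/eqP wv].
    have uS : u \notin S.
      apply/negP => uS; move: (hw u); rewrite !inE uS andbT.
      rewrite e_sym -wv in evu; rewrite evu andbT; apply/negP/negPn.
      by apply/eqP => uv; rewrite uv -wv e_irr in evu.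
    by apply/existsP; exists u; rewrite !inE uS /= e_sym.
  have wS : w \notin S by move: wSv; rewrite !inE wv.
  have /existsP [u' /andP [u'S eu'w]] := implyP (forallP dS w) wS.
  have u'v : u' = v.
    apply/eqP/negPn/negP => u'v; move: (hw u').
    by rewrite !inE u'v u'S eu'w.
  by apply/existsP; exists w; rewrite !inE wS /= e_sym -u'v.
have [M sMX mM] := exists_minimal dX.
exists M => //; apply/eqP => MS; rewrite MS in sMX.
have sI : forall v, v \in S -> forall u, ~~ e v u.
  move=> v vS; have := subsetP sMX v vS; rewrite !inE vS /=.
  by move/forallP.
case: (boolP (a \in S)) => aS; first by have := sI a aS b; rewrite eab.
have /existsP [u /andP [uS eua]] := implyP (forallP dS a) aS.
by have := sI u uS a; rewrite eua.
Qed.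

Lemma lower (T : finType) (e : rel T) (e_sym : symmetric e) (e_irr : irreflexive e)
  a b (eab : e a b) d : d0_prop e d -> Gamma_dom e < d.
Proof.
case=> _ hc; rewrite ltnNge; apply/negP => dG.
have := hc _ dG; rewrite /Dk_connected => conn.
have [S mS cS] := Gamma_att e.
have [M mM MS] := other_min e_sym e_irr eab mS.
have := conn S M; rewrite /Dk_vertex (min_dom mS) (min_dom mM) cS leqnn Gamma_ge //.
move=> /(_ isT isT) /connectP [[|S' p] /=].
  by move=> _ eq; rewrite eq eqxx in MS.
case/andP => h _ _; by have := no_step S' mS (eq_leq (esym cS)); rewrite h.
Qed.

Lemma upper_GG (T : finType) (e : rel T) k :
  Gamma_dom e + gamma_dom e <= k -> Dk_connected e k.
Proof.
move=> hk.
have [D dD cD] := gamma_att e.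
suff hA : forall A, Dk_vertex e k A -> connect (Dk_edge e k) A D.
  by move=> A B vA vB; apply: connect_trans (hA A vA) (conn_sym (hA B vB)).
move=> A /andP [dA kA].
have [A' sA' mA'] := exists_minimal dA.
apply: connect_trans (conn_down sA' (min_dom mA') kA) _.
apply: (conn_roof (U := A' :|: D)) => //; rewrite ?subsetUl ?subsetUr ?(min_dom mA') //.
rewrite cardsU (leq_trans (leq_subr _ _)) // (leq_trans _ hk) // -cD.
by rewrite leq_add2r Gamma_ge.
Qed.

Lemma dom2 (T : finType) (e : rel T) (e_sym : symmetric e) (e_irr : irreflexive e) x x' y y' :
  e x x' -> x' != y -> e y y' -> y' != x -> dominating e ([set: T] :\ x :\ y).
Proof.
move=> exx x'y eyy y'x; apply/forallP => v; apply/implyP.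
have y'y : y' != y by apply/eqP => yy; rewrite yy e_irr in eyy.
have x'x : x' != x by apply/eqP => xx; rewrite xx e_irr in exx.
rewrite !inE andbT negb_and !negbK => /orP [/eqP ->|/eqP ->].
  by apply/existsP; exists y'; rewrite !inE y'x y'y e_sym eyy.
by apply/existsP; exists x'; rewrite !inE x'y x'x e_sym exx.
Qed.

Lemma cardU1 (T : finType) (x : T) : #|[set: T] :\ x| = #|T| - 1.
Proof. have := cardsD1 x [set: T]. rewrite cardsT in_setT => h. by rewrite h add1n subn1. Qed.

Lemma pairU (T : finType) (e : rel T) k x y :
  #|T| - 1 <= k -> dominating e ([set: T] :\ x :\ y) ->
  connect (Dk_edge e k) ([set: T] :\ x) ([set: T] :\ y).
Proof.
move=> hk dC; apply: (conn_floor (C := [set: T] :\ x :\ y)) => //.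
- exact: subsetDl.
- by apply/subsetP => v; rewrite !inE; case: (v != y); case: (v != x).
- by rewrite cardU1.
- by rewrite cardU1.
Qed.

Lemma upper_n (T : finType) (e : rel T) (e_sym : symmetric e) (e_irr : irreflexive e)
  a b c d (eab : e a b) (ecd : e c d) (hu : uniq [:: a; b; c; d]) k :
  #|T| - 1 <= k -> Dk_connected e k.
Proof.
move=> hk.
move: hu; rewrite /= !inE !negb_or => /and4P [/and3P [ab ac ad] /andP [bc bd] cd _].
pose U x := [set: T] :\ x.
have dUa : dominating e (U a).
  apply: dom_sub (dom2 e_sym e_irr eab bc ecd _); first exact: subsetDl.
  by rewrite eq_sym.
have Pc : connect (Dk_edge e k) (U c) (U a).
  apply: pairU hk (dom2 e_sym e_irr ecd _ eab _) => //; by rewrite eq_sym.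
have Pd : connect (Dk_edge e k) (U d) (U a).
  have edc : e d c by rewrite e_sym.
  apply: pairU hk (dom2 e_sym e_irr edc _ eab _) => //; by rewrite eq_sym.
have Px : forall x u, e x u -> connect (Dk_edge e k) (U x) (U a).
  move=> x u exu.
  case: (x =P c) => [->//|/eqP xc]; case: (x =P d) => [->//|/eqP xd].
  case: (u =P c) => [uc|/eqP uc].
    have edc : e d c by rewrite e_sym.
    have ud : u != d by rewrite uc.
    have cx : c != x by rewrite eq_sym.
    by apply: connect_trans Pd; apply: pairU hk (dom2 e_sym e_irr exu ud edc cx).
  have dx : d != x by rewrite eq_sym.
  by apply: connect_trans Pc; apply: pairU hk (dom2 e_sym e_irr exu uc ecd dx).
suff hA : forall A, Dk_vertex e k A -> connect (Dk_edge e k) A (U a).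
  by move=> A B vA vB; apply: connect_trans (hA A vA) (conn_sym (hA B vB)).
move=> A /andP [dA kA].
case: (boolP (A == [set: T])) => [/eqP eA | nA].
  by rewrite eA in kA *; apply: (conn_down (subsetT _) dUa kA).
have [x xA] : exists x, x \notin A.
  apply/existsP; rewrite -negb_forall; apply: contra nA => /forallP h.
  by apply/eqP/setP => y; rewrite inE h.
have sAU : A \subset U x.
  by apply/subsetP => y yA; rewrite !inE andbT; apply/eqP => yx; rewrite -yx yA in xA.
have kU : #|U x| <= k by rewrite cardU1.
have /existsP [u /andP [uA eux]] := implyP (forallP dA x) xA.
apply: connect_trans (conn_sym (conn_down sAU dA kU)) _.
by apply: (Px x u); rewrite e_sym.
Qed.

Lemma wo (P : nat -> Prop) n : P n -> exists m, P m /\ forall d, P d -> m <= d.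
Proof.
elim: n {-2}n (leqnn n) => [|N IH] n hn Pn.
  exists n; split => // d _; by move: hn; rewrite leqn0 => /eqP ->.
case: (classic (exists d, d < n /\ P d)) => [[d [dn Pd]]|nex].
  by apply: (IH d) => //; rewrite -ltnS (leq_trans dn hn).
exists n; split => // d Pd; rewrite leqNgt; apply/negP => dn.
by apply: nex; exists d.
Qed.

Theorem corollary6 (T : finType) (e : rel T)
  (e_sym : symmetric e) (e_irr : irreflexive e)
  (two_disj : exists a b c d : T,
     [/\ e a b, e c d & uniq [:: a; b; c; d]]) :
  (exists d, is_d0 e d) /\
  (forall d, is_d0 e d ->
     (Gamma_dom e).+1 <= d /\ d <= minn (#|T| - 1) (Gamma_dom e + gamma_dom e)).
Proof.
have [a [b [c [d [eab ecd hu]]]]] := two_disj.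
pose m0 := minn (#|T| - 1) (Gamma_dom e + gamma_dom e).
have Pm0 : d0_prop e m0.
  split.
    rewrite leq_min leq_addl andbT -(cardU1 a) gamma_le //.
    apply: dom_sub (dom2 e_sym e_irr eab _ ecd _); first exact: subsetDl.
    - by move: hu; rewrite /= !inE !negb_or => /and4P [_ /andP [-> _] _ _].
    - by move: hu; rewrite /= !inE !negb_or => /and4P [/and3P [_ _ ad] _ _ _]; rewrite eq_sym.
  move=> k; rewrite geq_min => /orP [hk|hk].
    exact: (upper_n e_sym e_irr eab ecd hu hk).
  exact: upper_GG hk.
split.
  have [m [Pm mmin]] := wo Pm0.
  by exists m; split.
move=> d0 [P0 min0]; split.
  exact: (lower e_sym e_irr eab P0).
exact: (min0 m0 Pm0).
Qed.
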